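(* Let $G$ be a threshold graph with $n\ge3$ vertices and $\mathrm{seq}(G)=s_1s_2\cdots s_{n-1}$. Then $G$ is Hamiltonian if and only if $s_{n-1}=1$ and $h(s_1s_2\cdots s_{n-2})=0$.
   Context: A threshold graph on $n\ge1$ vertices is built from a base vertex $v_0$ by successively adding $v_1,\dots,v_{n-1}$, each either isolated (adjacent to no earlier vertex) or dominating (adjacent to all earlier vertices); its creation sequence $\mathrm{seq}(G)=s_1\cdots s_{n-1}$ has $s_i=1$ if $v_i$ is dominating and $s_i=0$ otherwise. For a binary string $s=s_1\cdots s_m$ and $0\le k\le m$, the $k$-th tail is $s_{m-k+1}\cdots s_m$ (empty for $k=0$); $z_k(s)$, $u_k(s)$ are the numbers of zeros and ones in it, and $h(s)=\max_{0\le k\le m}\{z_k(s)-u_k(s)\}$. *)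

(* Defs.v *)
From mathcomp Require Import all_boot all_order all_algebra.
Set Implicit Arguments. Unset Strict Implicit. Unset Printing Implicit Defensive.
Import Order.TTheory GRing.Theory Num.Theory.

(* Threshold graph with creation sequence s = s_1 ... s_{n-1} (s_i = nth false s (i-1)),
   on vertex set 'I_n (vertex i is v_i).  For i < j, v_i ~ v_j iff v_j was added as a
   dominating vertex, i.e. s_j = 1. *)

Definition threshold_adj (n : nat) (s : seq bool) : rel 'I_n :=
  fun i j => (i != j) && nth false s (maxn i j).-1.

Definition hamiltonian (n : nat) (e : rel 'I_n) : Prop :=
  exists p : seq 'I_n, [/\ uniq p, size p = n & cycle e p].

Definition tail_k (s : seq bool) (k : nat) : seq bool := drop (size s - k) s.
Definition zk (s : seq bool) (k : nat) : nat := count negb (tail_k s k).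
Definition uk (s : seq bool) (k : nat) : nat := count id (tail_k s k).

(* h(s) = max_{0 <= k <= |s|} (z_k(s) - u_k(s)), computed in int.  The neutral element 0
   of the max-fold is harmless since the k = 0 term is 0. *)
Definition hfun (s : seq bool) : int :=
  \big[Num.max/0%R]_(k < (size s).+1) ((zk s k)%:Z - (uk s k)%:Z)%R.
Arguments threshold_adj n s : clear implicits.

(* Main.v *)
Require Import Defs.
From mathcomp Require Import all_boot all_order all_algebra.
From mathcomp Require Import zify.
Import Order.TTheory GRing.Theory Num.Theory.
Set Implicit Arguments. Unset Strict Implicit.

Section S.
Variable s : seq bool.
Definition A : rel nat := fun i j => (i != j) && nth false s (maxn i j).-1.
Definition okp (q : seq nat) := if q is x :: r then path A x r else false.
Definition cover m (ps : seq (seq nat)) := all okp ps && perm_eq (flatten ps) (iota 0 m).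

Lemma A_top u v : u < v -> A u v = nth false s v.-1.
Proof. move=> uv; rewrite /A (maxn_idPr (ltnW uv)) neq_ltn uv. done. Qed.
Lemma A_sym u v : A u v = A v u.
Proof. by rewrite /A eq_sym maxnC. Qed.

Lemma cover_lt m ps u : cover m ps -> u \in flatten ps -> u < m.
Proof. by move=> /andP[_ /perm_mem H]; rewrite H mem_iota. Qed.

Lemma cover_pos m ps : cover m.+1 ps -> 0 < size ps.
Proof. case: ps => // /andP[_ /perm_size] /=; by rewrite size_iota. Qed.

Lemma tail_rcons t x k : k <= size t -> tail_k (rcons t x) k.+1 = rcons (tail_k t k) x.
Proof. move=> hk; by rewrite /tail_k size_rcons subSS drop_rcons // leq_subr. Qed.
Lemma zk_rcons t x k : k <= size t -> zk (rcons t x) k.+1 = zk t k + ~~ x.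
Proof. move=> hk; by rewrite /zk tail_rcons // -cats1 count_cat /= addn0. Qed.
Lemma uk_rcons t x k : k <= size t -> uk (rcons t x) k.+1 = uk t k + x.
Proof. move=> hk; by rewrite /uk tail_rcons // -cats1 count_cat /= addn0. Qed.
Lemma zk0 t : zk t 0 = 0. Proof. by rewrite /zk /tail_k subn0 drop_size. Qed.
Lemma uk0 t : uk t 0 = 0. Proof. by rewrite /uk /tail_k subn0 drop_size. Qed.

Lemma flatten_split (v : nat) ps : v \in flatten ps ->
  exists ps1 q ps2, ps = ps1 ++ q :: ps2 /\ v \in q.
Proof.
elim: ps => //= q ps IH; rewrite mem_cat => /orP[vq|/IH [ps1 [q' [ps2 [-> vq']]]]].
- by exists [::], q, ps.
- by exists (q :: ps1), q', ps2.
Qed.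

Definition ne (a b : seq nat) := [seq c <- [:: a; b] | c != [::]].

Lemma flatten_ne a b : flatten (ne a b) = a ++ b.
Proof. by case: a => [|x a]; case: b => [|y b] //=; rewrite ?cats0. Qed.

Lemma size_ne a b : size (ne a b) <= 2.
Proof. by case: a => [|x a]; case: b. Qed.

Lemma okp_split a v b : okp (a ++ v :: b) -> all okp (ne a b).
Proof.
case: a => [|x a] /=.
- by case: b => [|y b] //= /andP[_ ->].
- rewrite cat_path => /andP[pa /= /andP[_ pb]].
  by case: b pb => [|y b] //= => [_|/andP[_ ->]]; rewrite /= pa.
Qed.

Lemma okp_nbr a v b : okp (a ++ v :: b) -> (a != [::]) || (b != [::]) ->
  exists2 u, u \in a ++ b & A u v.
Proof.
case: a => [|x a] /=.
- case: b => [|y b] //= /andP[h _] _. exists y; first by rewrite inE eqxx.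
  by rewrite A_sym.
- rewrite cat_path => /andP[_ /= /andP[h _]] _. exists (last x a) => //.
  by rewrite -cat_cons mem_cat mem_last.
Qed.

Lemma iotaS m : iota 0 m.+1 = iota 0 m ++ [:: m].
Proof. by rewrite -addn1 iotaD. Qed.

Lemma flatten_cons (q : seq nat) ps : flatten (q :: ps) = q ++ flatten ps.
Proof. by []. Qed.

Lemma perm_split ps1 a v b ps2 m :
  perm_eq (flatten (ps1 ++ (a ++ v :: b) :: ps2)) (iota 0 m.+2) -> v = m.+1 ->
  perm_eq (flatten (ps1 ++ ne a b ++ ps2)) (iota 0 m.+1).
Proof.
move=> H hv; have : perm_eq (flatten (ps1 ++ (a ++ v :: b) :: ps2)) (v :: iota 0 m.+1).
  apply: (perm_trans H); rewrite -addn1 iotaD add0n hv.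
  by apply/permP => p; rewrite count_cat /= addn0 [RHS]addnC.
move=> H2; rewrite -(perm_cons v); apply: perm_trans H2.
apply/permP => p; rewrite !flatten_cat flatten_cons flatten_ne; set F1 := flatten ps1; set F2 := flatten ps2; rewrite /= !count_cat /=; lia.
Qed.

Lemma lb m : m <= size s -> forall ps, cover m.+1 ps ->
  forall k, k <= m -> zk (take m s) k + 1 <= size ps + uk (take m s) k.
Proof.
elim: m => [|m IH] hm ps cov k hk.
- have -> : k = 0 by lia.
  by rewrite zk0 uk0 addn0 add0n (cover_pos cov).
case: k hk => [|k] hk; first by rewrite zk0 uk0 addn0 add0n (cover_pos cov).
have ms : m < size s by [].
have szt : size (take m s) = m by rewrite size_takel // ltnW.
rewrite (take_nth false ms) zk_rcons ?szt // uk_rcons ?szt //.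
have vin : m.+1 \in flatten ps.
  move: (cov) => /andP[_ /perm_mem H]; rewrite H mem_iota; lia.
case: (flatten_split vin) => ps1 [q [ps2 [eps vq]]].
case/splitPr: vq eps => a b eps.
move: (cov); rewrite /cover eps all_cat /= => /andP[/and3P[ok1 okq ok2] pe].
have cov' : cover m.+1 (ps1 ++ ne a b ++ ps2).
  apply/andP; split; first by rewrite !all_cat ok1 ok2 (okp_split okq).
  exact: (perm_split pe).
have := IH (ltnW ms) _ cov' k hk.
rewrite !size_cat /=.
case x: (nth false s m).
- have := size_ne a b; rewrite /=; lia.
have e0 : (a == [::]) && (b == [::]).
  apply/negPn/negP; rewrite negb_and => nab.
  case: (okp_nbr okq nab) => u ua Auv.
  have ult : u < m.+2.
    apply: (cover_lt cov); rewrite eps flatten_cat mem_cat /= mem_cat.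
    by move: ua; rewrite !mem_cat inE => /orP[->|->]; rewrite ?orbT.
  have uneq : u != m.+1 by case/andP: Auv.
  have : u < m.+1 by lia.
  by move/A_top; rewrite Auv /= x.
case/andP: e0 => /eqP -> /eqP -> /=; rewrite /=; lia.
Qed.

Lemma ex m : m <= size s -> exists ps, cover m.+1 ps /\
  exists2 k, k <= m & size ps + uk (take m s) k <= 1 + zk (take m s) k.
Proof.
elim: m => [|m IH] hm.
  exists [:: [:: 0]]; split; first by []. by exists 0; rewrite // zk0 uk0.
have ms : m < size s by [].
have szt : size (take m s) = m by rewrite size_takel // ltnW.
have [ps [cov [k hk hK]]] := IH (ltnW ms).
rewrite (take_nth false ms).
case/andP: (cov) => okps pe.
case x: (nth false s m).
- case: ps cov okps pe hK => [|q1 [|q2 ps]] cov okps pe hK.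
  + by have := cover_pos cov.
  + exists [:: rcons q1 m.+1]; split; last by exists 0; rewrite // zk0 uk0.
    apply/andP; split.
    * move: okps => /= /andP[]; clear hK pe; case: q1 cov => //= y q1 cov ok _.
      rewrite andbT rcons_path ok /= A_top; first by rewrite x.
      have : last y q1 \in flatten [:: y :: q1] by rewrite /= cats0 mem_last.
      by move/(cover_lt cov).
    * rewrite (iotaS m.+1) /= cats0 -cats1.
      apply/permP => p; move/permP: pe => /(_ p); rewrite /= cats0 !count_cat. move=> ->; by rewrite addnA.
  + exists ((q1 ++ m.+1 :: q2) :: ps); split; last first.
      exists k.+1 => //. rewrite zk_rcons ?szt ?uk_rcons ?szt //; move: hK => /=; lia.
    apply/andP; split.
    * move: okps => /= /and3P[]; clear hK; case: q1 cov pe => //= y q1 cov pe ok1.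
      case: q2 cov pe => //= z q2 cov pe ok2 okps.
      rewrite okps andbT cat_path ok1 /= ok2 andbT.
      have hz : z \in flatten [:: y :: q1, z :: q2 & ps] 
        by apply/flattenP; exists (z :: q2); rewrite !inE eqxx ?orbT.
      have hl : last y q1 \in flatten [:: y :: q1, z :: q2 & ps].
        by apply/flattenP; exists (y :: q1); [rewrite inE eqxx | exact: mem_last].
      rewrite A_top ?x /=; last exact: (cover_lt cov hl).
      by rewrite A_sym A_top ?x //; exact: (cover_lt cov hz).
    * rewrite (iotaS m.+1).
      apply/permP => p; move/permP: pe => /(_ p); rewrite /= !count_cat /=. move: (count p q1) (count p q2) (count p (flatten ps)) (count p (iota 1 m)) (nat_of_bool (p 0)) (nat_of_bool (p m.+1)) => *; lia.
- exists ([:: m.+1] :: ps); split; last first.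
    exists k.+1 => //. rewrite zk_rcons ?szt ?uk_rcons ?szt //; move: hK => /=; lia.
  apply/andP; split; first by rewrite /= okps.
  rewrite (iotaS m.+1).
  apply/permP => p; move/permP: pe => /(_ p); rewrite /= !count_cat /=; lia.
Qed.

End S.

Lemma bigmax_ge_seq (I : eqType) (r : seq I) (F : I -> int) i :
  i \in r -> (F i <= \big[Num.max/0%R]_(j <- r) F j)%R.
Proof.
elim: r => // x r IH; rewrite inE big_cons => /orP[/eqP->|/IH h]; rewrite le_max ?lexx //.
by rewrite h orbT.
Qed.

Lemma hfun_iff t : hfun t = 0%R <-> (forall k, k <= size t -> zk t k <= uk t k).
Proof.
split.
- move=> H k hk.
  have := @bigmax_ge_seq _ (index_enum 'I_(size t).+1)
     (fun j : 'I_(size t).+1 => ((zk t j)%:Z - (uk t j)%:Z)%R) (Ordinal (hk : k < (size t).+1))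
     (mem_index_enum _).
  rewrite /hfun in H; rewrite H /=; lia.
- move=> H; apply/eqP; rewrite eq_le; apply/andP; split.
  + rewrite /hfun; apply: (big_ind (fun v : int => v <= 0)%R) => //.
      by move=> x y hx hy; rewrite ge_max hx hy.
    move=> i _; have := H i (ltn_ord i); lia.
  + have := @bigmax_ge_seq _ (index_enum 'I_(size t).+1)
     (fun j : 'I_(size t).+1 => ((zk t j)%:Z - (uk t j)%:Z)%R) ord0 (mem_index_enum _).
    by rewrite /= zk0 uk0.
Qed.

Theorem mainTheorem8 (n : nat) (s : seq bool) :
  3 <= n -> size s = n.-1 ->
  (hamiltonian (threshold_adj n s) <->
   nth false s (n - 2) = true /\ hfun (take (n - 2) s) = 0%R).
Proof.
move=> n3 szs.
have [M eM] : exists M, n = M.+2 by exists (n - 2); lia.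
subst n; rewrite (_ : M.+2 - 2 = M); last by lia.
have M1 : 0 < M by lia.
have hMs : M <= size s by rewrite szs /=.
have szt : size (take M s) = M by rewrite size_takel.
rewrite hfun_iff szt.
have E : threshold_adj M.+2 s =2 relpre val (A s).
  by move=> i j; rewrite /= /A /threshold_adj val_eqE.
have iot : iota 0 M.+2 = iota 0 M.+1 ++ [:: M.+1] by apply: iotaS.
split.
- case=> p [up sp cp].
  set q := map val p.
  have cq : cycle (A s) q by rewrite /q cycle_map -(eq_cycle E).
  have uq : uniq q by rewrite /q map_inj_uniq //; exact: val_inj.
  have sub : {subset q <= iota 0 M.+2}.
    by move=> x /mapP [y _ ->]; rewrite mem_iota /= ltn_ord.
  have pq : perm_eq q (iota 0 M.+2).
    apply: uniq_perm => //; first exact: iota_uniq.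
    apply: (uniq_min_size uq sub _).2.
    by rewrite size_iota /q size_map sp.
  have Mq : M.+1 \in q by rewrite (perm_mem pq) mem_iota; lia.
  have := rot_index Mq; set r := (drop _ _ ++ take _ _) => er.
  have cr : cycle (A s) (M.+1 :: r) by rewrite -er rot_cycle.
  have pr : perm_eq r (iota 0 M.+1).
    have h1 : perm_eq (M.+1 :: r) (iota 0 M.+2) by rewrite -er perm_rot.
    have h2 : perm_eq (iota 0 M.+2) (M.+1 :: iota 0 M.+1) by rewrite iot perm_catC.
    rewrite -(perm_cons M.+1); exact: perm_trans h1 h2.
  case: r er cr pr => [|y w] er cr pr.
    by have := perm_size pr; rewrite size_iota.
  move: cr; rewrite /= rcons_path => /and3P[Ay pw _].
  have cov : cover s M.+1 [:: y :: w] by rewrite /cover /= pw cats0 pr.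
  have yl : y < M.+1.
    have : y \in iota 0 M.+1 by rewrite -(perm_mem pr) inE eqxx.
    rewrite mem_iota; lia.
  split.
    by move: Ay; rewrite A_sym A_top.
  move=> k hk; have := lb hMs cov hk; rewrite /=; lia.
- case=> hx hz.
  have [ps [cov [k hk hK]]] := ex hMs.
  have := hz k hk; have := cover_pos cov.
  case: ps cov hK => [|q [|q' ps]] cov hK //=; last by move: hK => /=; lia.
  move=> _ _ {hK}; case/andP: cov => /=; rewrite andbT cats0.
  case: q => [|y w] //= pw pe.
  set c := M.+1 :: y :: w.
  have pc : perm_eq c (iota 0 M.+2) by rewrite iot /c perm_sym perm_catC /= perm_cons perm_sym.
  have cl : forall x, x \in c -> x < M.+2 by move=> x; rewrite (perm_mem pc) mem_iota.
  set p := map (@inord M.+1) c.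
  have mp : map val p = c.
    rewrite /p -map_comp; apply: map_id_in => x /cl xc /=; exact: inordK.
  exists p; split.
  + by rewrite -(map_inj_uniq val_inj) mp (perm_uniq pc) iota_uniq.
  + by rewrite -(size_map val) mp (perm_size pc) size_iota.
  + rewrite (eq_cycle E) -cycle_map mp /c /= rcons_path pw /=.
    have ly : y \in iota 0 M.+1 by rewrite -(perm_mem pe) inE eqxx.
    have ll : last y w \in iota 0 M.+1 by rewrite -(perm_mem pe) mem_last.
    rewrite mem_iota /= in ly; rewrite mem_iota /= in ll.
    rewrite add0n in ly ll; by rewrite [A s M.+1 y]A_sym !A_top //= hx.
Qed.
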